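(* Let $(\Omega,\Sigma,\mu;\phi)$ be a bimeasurable measure preserving dynamical system such that for every $A\in\Sigma$ the sequence $(\phi^n(A))_{n\in\mathbb{N}}$ converges in the measure algebra $\Sigma/\sim$. Then $\Sigma_\infty\subseteq\overline{\Sigma_{\mathrm{inv}}}$.
   Context: A measure preserving dynamical system $(\Omega,\Sigma,\mu;\phi)$ is a probability space with a measurable map $\phi\colon\Omega\to\Omega$ such that $\mu(\phi^{-1}(A))=\mu(A)$ for all $A\in\Sigma$; it is bimeasurable if $\phi^{-1}(A),\phi(A)\in\Sigma$ for all $A\in\Sigma$. $A\sim B$ iff $\mu(A\triangle B)=0$; $\Sigma/\sim$ is the set of equivalence classes with metric $d(A,B)=\mu(A\triangle B)$. $\Sigma_n=\{\phi^{-n}(A):A\in\Sigma\}$, $\Sigma_\infty=\bigcap_{n\in\mathbb{N}}\Sigma_n$, $\Sigma_{\mathrm{inv}}=\{A\in\Sigma:\phi^{-1}(A)=A\}$, and $\overline{\Sigma_{\mathrm{inv}}}=\{A\in\Sigma:\exists B\in\Sigma_{\mathrm{inv}},\ \mu(A\triangle B)=0\}$. *)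

(* Defs.v *)
From HB Require Import structures.
From mathcomp Require Import all_boot all_order all_algebra.
From mathcomp Require Import all_classical all_reals all_analysis.
Set Implicit Arguments. Unset Strict Implicit. Unset Printing Implicit Defensive.
Import Order.TTheory GRing.Theory Num.Theory.
Local Open Scope classical_set_scope.
Local Open Scope ring_scope.

Definition symdiff (T : Type) (A B : set T) : set T := (A `\` B) `|` (B `\` A).

Definition measure_preserving d (T : measurableType d) (R : realType)
  (mu : set T -> \bar R) (phi : T -> T) : Prop :=
  measurable_fun setT phi /\
  forall A, measurable A -> mu (phi @^-1` A) = mu A.

Definition bimeasurable d (T : measurableType d) (phi : T -> T) : Prop :=
  forall A : set T, measurable A ->
    measurable (phi @^-1` A) /\ measurable (phi @` A).

(* (phi^n(A))_n converges in the measure algebra Sigma/~ with metric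
   d(A,B) = mu(A \triangle B): some measurable B is the limit *)
Definition image_seq_converges d (T : measurableType d) (R : realType)
  (mu : set T -> \bar R) (phi : T -> T) (A : set T) : Prop :=
  exists B : set T, measurable B /\
    (fun n : nat => mu (symdiff (iter n phi @` A) B)) @ \oo --> 0%E.

Definition Sigma_n d (T : measurableType d) (phi : T -> T) (n : nat) : set (set T) :=
  [set E | exists A, measurable A /\ E = iter n phi @^-1` A].

Definition Sigma_infty d (T : measurableType d) (phi : T -> T) : set (set T) :=
  [set E | forall n : nat, Sigma_n phi n E].

Definition Sigma_inv d (T : measurableType d) (phi : T -> T) : set (set T) :=
  [set A | measurable A /\ phi @^-1` A = A].

(* closure of Sigma_inv: sets a.e.-equal to an invariant set *)
Definition Sigma_inv_bar d (T : measurableType d) (R : realType)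
  (mu : set T -> \bar R) (phi : T -> T) : set (set T) :=
  [set A | measurable A /\ exists B, Sigma_inv phi B /\ mu (symdiff A B) = 0%E].

(* Main.v *)
Require Import Defs.
From HB Require Import structures.
From mathcomp Require Import all_boot all_order all_algebra.
From mathcomp Require Import all_classical all_reals all_analysis.
Import Order.TTheory GRing.Theory Num.Theory.
Local Open Scope classical_set_scope.

Lemma preimage_symdiff (T : Type) (f : T -> T) (A B : set T) :
  f @^-1` symdiff A B = symdiff (f @^-1` A) (f @^-1` B).
Proof. by apply/seteqP; split => x /=. Qed.

Lemma symdiff_tri (T : Type) (A B C : set T) :
  symdiff A C `<=` symdiff A B `|` symdiff B C.
Proof.
move=> x [[xA xC]|[xC xA]]; have [xB|xB] := pselect (B x).
- by right; left.
- by left; left.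
- by left; right.
- by right; right.
Qed.

Lemma symdiff_measurable d (T : measurableType d) (A B : set T) :
  measurable A -> measurable B -> measurable (symdiff A B).
Proof. by move=> mA mB; apply: measurableU; apply: measurableD. Qed.

Lemma symdiffxx (T : Type) (A : set T) : symdiff A A = set0.
Proof. by apply/seteqP; split => x //= [[]|[]]. Qed.

Section S.
Context d (T : measurableType d) (R : realType) (mu : probability T R) (phi : T -> T).
Hypothesis mp : measure_preserving mu phi.
Hypothesis bm : bimeasurable phi.
Local Open Scope ereal_scope.

Lemma iter_pre_meas n X : measurable X -> measurable (iter n phi @^-1` X).
Proof.
elim: n X => // n IH X mX.
by have -> : iter n.+1 phi @^-1` X = iter n phi @^-1` (phi @^-1` X) by [];
  apply: IH; exact: (bm _ mX).1.
Qed.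

Lemma iter_img_meas n X : measurable X -> measurable (iter n phi @` X).
Proof.
move=> mX; elim: n => [|n IH].
  by rewrite /= image_id.
have -> : iter n.+1 phi @` X = phi @` (iter n phi @` X).
  by apply/seteqP; split => y /=; [case=> x Xx <-; exists (iter n phi x) => //; exists x|
    case=> _ [x Xx <-] <-; exists x].
exact: (bm _ IH).2.
Qed.

Lemma iter_pre_mu n X : measurable X -> mu (iter n phi @^-1` X) = mu X.
Proof.
elim: n X => // n IH X mX.
have -> : iter n.+1 phi @^-1` X = iter n phi @^-1` (phi @^-1` X) by [].
by rewrite IH ?mp.2 //; exact: (bm _ mX).1.
Qed.

Lemma tri X Y Z : measurable X -> measurable Y -> measurable Z ->
  mu (symdiff X Z) <= mu (symdiff X Y) + mu (symdiff Y Z).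
Proof.
move=> mX mY mZ.
apply: le_trans; last apply: measureU2; try exact: symdiff_measurable.
apply: le_measure; rewrite ?inE; last exact: symdiff_tri.
- exact: symdiff_measurable.
- by apply: measurableU; exact: symdiff_measurable.
Qed.

Lemma le_lim0 (c : \bar R) (v : nat -> \bar R) :
  (forall n, c <= v n) -> v @ \oo --> 0 -> c <= 0.
Proof.
move=> cv v0.
have <- : lim (v @ \oo) = 0 by apply: cvg_lim.
apply: lime_ge; first by apply/cvg_ex; exists 0.
by near=> n; apply: cv.
Unshelve. all: by end_near.
Qed.

End S.

Lemma symdiffC (T : Type) (A B : set T) : symdiff A B = symdiff B A.
Proof. by rewrite /symdiff setUC. Qed.

Theorem lemma3p4 (d : measure_display) (T : measurableType d) (R : realType)
  (mu : probability T R) (phi : T -> T) :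
  measure_preserving mu phi ->
  bimeasurable phi ->
  (forall A : set T, measurable A -> image_seq_converges mu phi A) ->
  Sigma_infty phi `<=` Sigma_inv_bar mu phi.
Proof.
move=> mp bm conv E SE.
have mE : measurable E by have [A [mA ->]] := SE 0%N.
pose Bn n := iter n phi @` E.
have EBn n : iter n phi @^-1` Bn n = E.
  have [A [_ EA]] := SE n.
  apply/seteqP; split => x /=.
    by case=> y Ey eq; rewrite EA /= -eq; move: Ey; rewrite EA.
  by move=> Ex; exists x.
have mBn n : measurable (Bn n) by exact: (@iter_img_meas _ _ phi bm).
have [B [mB cB]] := conv E mE.
pose u n := mu (symdiff (Bn n) B).
have mpre n X : measurable X -> measurable (iter n phi @^-1` X) by exact: (@iter_pre_meas _ _ phi bm).
have mphi X : measurable X -> measurable (phi @^-1` X) by move=> mX; exact: (bm _ mX).1.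
have zero1 n : mu (symdiff (phi @^-1` Bn n.+1) (Bn n)) = 0%E.
  rewrite -(@iter_pre_mu _ _ _ mu phi mp bm n); last by apply: symdiff_measurable; auto.
  rewrite preimage_symdiff.
  change (iter n phi @^-1` (phi @^-1` Bn n.+1)) with (iter n.+1 phi @^-1` Bn n.+1).
  by rewrite !EBn symdiffxx measure0.
have inv0 : mu (symdiff (phi @^-1` B) B) = 0%E.
  apply/eqP; rewrite -measure_le0.
  apply: (@le_lim0 R _ (fun n => (u n.+1 + u n)%E)).
    move=> n.
    apply: le_trans; first apply: (@tri _ _ _ mu _ (phi @^-1` Bn n.+1)); auto.
    rewrite -preimage_symdiff mp.2; last by apply: symdiff_measurable.
    rewrite symdiffC; apply: leeD => //.
    apply: le_trans; first apply: (@tri _ _ _ mu _ (Bn n)); auto.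
    by rewrite zero1 add0e.
  rewrite -[X in _ --> X]adde0; apply: cvgeD => //.
  by rewrite (cvg_shiftS (fun n => u n)).
have invn n : mu (symdiff (iter n phi @^-1` B) B) = 0%E.
  elim: n => [|n IH]; first by rewrite /= symdiffxx measure0.
  apply/eqP; rewrite -measure_le0.
  apply: le_trans; first apply: (@tri _ _ _ mu _ (iter n phi @^-1` B)); auto.
  change (iter n.+1 phi @^-1` B) with (iter n phi @^-1` (phi @^-1` B)).
  rewrite -preimage_symdiff iter_pre_mu //; last by apply: symdiff_measurable; auto.
  by rewrite inv0 IH adde0.
have EB : mu (symdiff E B) = 0%E.
  apply/eqP; rewrite -measure_le0; apply: (@le_lim0 R _ u) => // n.
  apply: le_trans; first apply: (@tri _ _ _ mu _ (iter n phi @^-1` B)); auto.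
  rewrite invn adde0 -{1}(EBn n) -preimage_symdiff iter_pre_mu //.
  exact: symdiff_measurable.
pose C := \bigcap_k \bigcup_n (iter (n + k) phi @^-1` B).
have mC : measurable C.
  by apply: bigcapT_measurable => k; apply: bigcupT_measurable => n; auto.
have Cinv : phi @^-1` C = C.
  apply/seteqP; split => x /= H k _.
    have [n _ Hn] := H k I.
    by exists n.+1 => //; move: Hn; rewrite /preimage /= -iterSr.
  have [n _ Hn] := H k.+1 I.
  by exists n => //; move: Hn; rewrite /preimage /= -iterSr addnS.
have CB : mu (symdiff B C) = 0%E.
  have : mu.-negligible (\bigcup_n symdiff (iter n phi @^-1` B) B).
    apply: negligible_bigcup => n.
    exists (symdiff (iter n phi @^-1` B) B); split => //; [apply: symdiff_measurable; auto | exact: invn].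
  case=> N [mN N0 sN].
  apply/eqP; rewrite -measure_le0 -N0; apply: le_measure; rewrite ?inE //.
    exact: symdiff_measurable.
  move=> x [[Bx nCx]|[Cx nBx]]; apply: sN.
    have [k nk] : exists k, ~ (\bigcup_n iter (n + k) phi @^-1` B) x.
      by apply/existsNP => Hall; apply: nCx => k _; exact: Hall k.
    exists k => //; right; split => // Hk; apply: nk; exists 0%N => //.
  have [n _ Hn] := Cx 0%N I.
  by exists n => //; left; split => //; rewrite addn0 in Hn.
split => //; exists C; split; first by split.
apply/eqP; rewrite -measure_le0.
apply: le_trans; first apply: (@tri _ _ _ mu _ B); auto.
by rewrite EB CB adde0.
Qed.
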